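(* For all $d\ge1$, $\alpha>1$, positive weights $\boldsymbol\gamma=\{\gamma_u\}$ with $\gamma_\emptyset=1$, and $M\ge1$, $$\sum_{\mathbf h\notin\mathcal A_d(M)}\frac1{r(\mathbf h)}\le C_{2,d,\tau,\alpha,\boldsymbol\gamma}\,M^{-\frac{1-\tau}{\alpha\tau}}\qquad\text{for all }\tau\in(\tfrac1\alpha,1),$$ where $$C_{2,d,\tau,\alpha,\boldsymbol\gamma}:=\gamma_{\{1\}}^{\frac{\tau-1}{\alpha\tau}}\,\frac{\tau}{1-\tau}\Big(\sum_{u\subseteq\{1:d\}}\gamma_u^\tau[2\zeta(\alpha\tau)]^{|u|}\Big)^{1/\tau}.$$
   Context: $\{1:d\}=\{1,\ldots,d\}$; $\zeta$ is the Riemann zeta function. Weights $\gamma_u>0$ for finite $u\subset\mathbb N$, $\gamma_\emptyset=1$. For $\mathbf h\in\mathbb Z^d$, $\mathrm{supp}(\mathbf h)=\{j:h_j\ne0\}$, $r(\mathbf h)=\gamma_{\mathrm{supp}(\mathbf h)}^{-1}\prod_{j\in\mathrm{supp}(\mathbf h)}|h_j|^\alpha$, and $\mathcal A_d(M)=\{\mathbf h\in\mathbb Z^d:r(\mathbf h)\le M\}$. *)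

(* Defs.v *)
From HB Require Import structures.
From mathcomp Require Import all_boot all_order all_algebra.
From mathcomp Require Import finmap.
From mathcomp Require Import all_classical all_reals all_analysis.
Set Implicit Arguments. Unset Strict Implicit. Unset Printing Implicit Defensive.
Import Order.TTheory GRing.Theory Num.Theory numFieldNormedType.Exports.
Local Open Scope ring_scope.

Definition zeta (R : realType) (s : R) : R :=
  limn (series (fun n : nat => (n.+1%:R : R) `^ (- s))).

(* Coordinates are 'I_d (0-based); coordinate j corresponds to index j+1 in {1:d}. *)
Definition toN (d : nat) (U : {set 'I_d}) : {fset nat} :=
  [fset (val j).+1 | j in enum U]%fset.

Definition supp (d : nat) (h : {ffun 'I_d -> int}) : {fset nat} :=
  toN [set j | h j != 0].

Definition rfun (R : realType) (d : nat) (alpha : R) (gamma : {fset nat} -> R)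
  (h : {ffun 'I_d -> int}) : R :=
  (gamma (supp h))^-1 * \prod_(j : 'I_d | h j != 0) (`|h j|%:~R : R) `^ alpha.

Definition C2 (R : realType) (d : nat) (tau alpha : R) (gamma : {fset nat} -> R) : R :=
  (gamma [fset 1%N]%fset) `^ ((tau - 1) / (alpha * tau)) * (tau / (1 - tau)) *
  (\sum_(U : {set 'I_d}) (gamma (toN U)) `^ tau * (2 * zeta (alpha * tau)) ^+ #|U|)
    `^ (1 / tau).

(* Main.v *)
Require Import Defs.
From HB Require Import structures.
From mathcomp Require Import all_boot all_order all_algebra.
From mathcomp Require Import finmap.
From mathcomp Require Import all_classical all_reals all_analysis.
From mathcomp Require Import ring lra zify.
Import Order.TTheory GRing.Theory Num.Theory.
Local Open Scope ring_scope.

Module Helpers.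
Import numFieldNormedType.Exports.

Lemma bern_step (R : realType) (s : R) (k : nat) : 1 < s -> (1 < k)%N ->
  k%:R `^ (-s) + k%:R `^ (1-s) / (s-1) <= (k.-1)%:R `^ (1-s) / (s-1).
Proof.
move=> s1 k1.
have K0 : 0 < (k%:R : R) by rewrite ltr0n; lia.
have Ki : (k%:R : R)^-1 < 1 by rewrite invf_lt1 // ltr1n.
have aK : (k.-1%:R : R) = k%:R * (1 - k%:R^-1).
  rewrite mulrBr mulr1 mulfV ?gt_eqF //.
  by move: K0 Ki; case: k k1 => // k' _ _ _; rewrite -natr1 addrK.
have E : 1 + (s-1) / k%:R <= (1 - k%:R^-1) `^ (1-s).
  rewrite /powR gt_eqF ?subr_gt0 //.
  apply: le_trans (expR_ge1Dx _); rewrite lerD2l.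
  have := @le_ln1Dx R (- k%:R^-1); rewrite ltrN2 => /(_ Ki) hl.
  have : (1 - s) * (- k%:R^-1) <= (1 - s) * ln (1 - k%:R^-1).
    by rewrite ler_wnM2l // subr_le0 ltW.
  by rewrite mulrN -mulNr opprB.
rewrite aK powRM ?ler0n //; last by rewrite subr_ge0 ltW.
have -> : (k%:R : R) `^ (1 - s) = k%:R `^ (-s) * k%:R.
  rewrite addrC powRD ?powRr1 ?ler0n //.
  by apply/implyP => _; rewrite gt_eqF.
set p := (k%:R : R) `^ (-s); set K := (k%:R : R); set e := _ `^ _ in E *.
have p0 : 0 < p by rewrite powR_gt0.
have s0 : 0 < s - 1 by rewrite subr_gt0.
rewrite -mulrA (mulrC K) mulrA.
have -> : p + p / (s - 1) * K = p * K * (1 + (s - 1) / K) / (s - 1).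
  by field; rewrite !gt_eqF.
by rewrite ler_pM2r ?invr_gt0 // ler_pM2l ?mulr_gt0.
Qed.

Lemma zeta_bound (R : realType) (s : R) : 1 < s -> forall N,
  \sum_(i < N) (i.+1%:R : R) `^ (-s) <= zeta s.
Proof.
move=> s1.
set f := fun n : nat => (n.+1%:R : R) `^ (-s).
have s0 : 0 < s - 1 by rewrite subr_gt0.
have tele : forall N, \sum_(i < N.+1) f i + N.+1%:R `^ (1-s) / (s-1) <= 1 + 1/(s-1).
  elim=> [|N IH].
    by rewrite big_ord1 /f /= -[0.+1%:R]/(1 : R) powR1.
  rewrite big_ord_recr /=.
  apply: le_trans IH; rewrite -addrA lerD2l.
  by have := @bern_step R s N.+2 s1 isT.
have ub : forall N, series f N <= 1 + 1/(s-1).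
  case=> [|N]; rewrite seriesEord /=.
    by rewrite big_ord0 addr_ge0 // divr_ge0 // ltW.
  apply: le_trans (tele N); by rewrite lerDl divr_ge0 ?powR_ge0 // ltW.
have nd : nondecreasing_seq (series f).
  by apply: nondecreasing_series => n _ _; exact: powR_ge0.
have cv : cvgn (series f).
  apply: nondecreasing_is_cvgn => //; exists (1 + 1/(s-1)) => _ [n _ <-]; exact: ub.
move=> N; apply: le_trans (nondecreasing_cvgn_le nd cv N).
by rewrite seriesEord /=.
Qed.

Lemma fin_fact (R : realType) (d : nat) (T : finType) (e : T -> int)
    (G : {set 'I_d} -> R) (w : int -> R) :
  \sum_(n : T) (e n == 0)%:R = 1 :> R ->
  \sum_(k : {ffun 'I_d -> T}) G [set j | e (k j) != 0] *
      \prod_(j | e (k j) != 0) w (e (k j))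
  = \sum_(U : {set 'I_d}) G U * (\sum_(n : T | e n != 0) w (e n)) ^+ #|U|.
Proof.
move=> H0.
pose g (U : {set 'I_d}) j n : R :=
  if j \in U then (e n != 0)%:R * w (e n) else (e n == 0)%:R.
have step : forall k : {ffun 'I_d -> T},
    G [set j | e (k j) != 0] * \prod_(j | e (k j) != 0) w (e (k j))
    = \sum_U G U * \prod_j g U j (k j).
  move=> k; rewrite (bigD1 [set j | e (k j) != 0]) //= [X in _ = _ + X]big1 ?addr0.
    congr (_ * _); rewrite big_mkcond; apply: eq_bigr => j _; rewrite /g inE.
    by have [->|nz] := eqVneq (e (k j)) 0; rewrite ?eqxx ?nz ?mul1r.
  move=> U hU.
  case: (pickP (fun j => (j \in U) != (e (k j) != 0))) => [j hj|none].
    rewrite (bigD1 j) //= /g; move: hj; case: (j \in U) => /= hj.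
      have z : e (k j) == 0 by move: hj; case: (e (k j) == 0).
      by rewrite z /= mul0r mul0r mulr0.
    have z : (e (k j) == 0) = false by move: hj; case: (e (k j) == 0).
    by rewrite z /= mul0r mulr0.
  exfalso; move/negP: hU; apply; apply/eqP/setP => j; rewrite inE.
  by move: (none j) => /= /negbFE/eqP.
rewrite (eq_bigr _ (fun k _ => step k)) exchange_big /=.
apply: eq_bigr => U _; rewrite -mulr_sumr; congr (_ * _).
rewrite -bigA_distr_bigA /=.
rewrite (eq_bigr (fun j => if j \in U then \sum_(n | e n != 0) w (e n) else 1)).
  by rewrite -big_mkcond prodr_const.
move=> j _; rewrite /g; case: (j \in U) => //.
by rewrite [RHS]big_mkcond; apply: eq_bigr => n _; case: (e n != 0); rewrite ?mul1r ?mul0r.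
Qed.
Lemma big_opt (R : nmodType) (T : finType) (F : option T -> R) :
  \sum_(o : option T) F o = F None + \sum_(p : T) F (Some p).
Proof.
have -> : \sum_(o : option T) F o = \sum_(o <- None :: map Some (index_enum T)) F o.
  by rewrite /index_enum !unlock /= /option_enum !unlock.
rewrite big_cons big_map.
by [].
Qed.

Lemma prod_powR (R : realType) (I : Type) (r : seq I) (P : pred I) (f : I -> R) (x : R) :
  (forall i, P i -> 0 <= f i) ->
  (\prod_(i <- r | P i) f i) `^ x = \prod_(i <- r | P i) (f i) `^ x.
Proof.
move=> f0.
have := @big_ind2 R R (fun a b => 0 <= a /\ a `^ x = b) 1 *%R 1 *%R.
move=> /(_ _ _ _ r P f (fun i => (f i) `^ x)) [] //.
- by rewrite powR1.
- by move=> a b c e [a0 <-] [c0 <-]; rewrite mulr_ge0 // powRM.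
- by move=> i Pi; split; [exact: f0|].
Qed.

Definition eopt {N : nat} (n : option (bool * 'I_N)) : int :=
  match n with None => 0 | Some (b, i) => if b then - (i.+1%:Z) else i.+1%:Z end.

Lemma eopt0 (R : realType) N : \sum_(n : option (bool * 'I_N)) ((eopt n == 0)%:R : R) = 1.
Proof.
rewrite big_opt big1 ?addr0.
  by rewrite /eopt eqxx.
by move=> [[] i] _; rewrite /eopt ?oppr_eq0.
Qed.

Lemma eoptW (R : realType) (alpha tau : R) N :
  \sum_(n : option (bool * 'I_N) | eopt n != 0) ((`|eopt n|%:~R : R) `^ alpha) `^ (- tau)
  = 2 * \sum_(i < N) (i.+1%:R : R) `^ (- (alpha * tau)).
Proof.
have E : forall b (i : 'I_N), (if eopt (Some (b, i)) != 0 then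
    ((`|eopt (Some (b, i))|%:~R : R) `^ alpha) `^ (- tau) else 0)
    = (i.+1%:R : R) `^ (- (alpha * tau)).
  move=> b i; rewrite /eopt; case: b; rewrite ?oppr_eq0 /= ?normrN ger0_norm //.
    by rewrite -powRrM mulrN.
  by rewrite -powRrM mulrN.
rewrite big_mkcond big_opt /= add0r.
rewrite (eq_bigr (fun p : bool * 'I_N => (fun (b : bool) (i : 'I_N) => (i.+1%:R : R) `^ (- (alpha * tau))) p.1 p.2)); last by move=> [b i] _; rewrite E.
rewrite -(pair_bigA _ (fun (_ : bool) (i : 'I_N) => (i.+1%:R : R) `^ (- (alpha * tau)))).
by rewrite big_bool /= mulr2n mulrDl mul1r.
Qed.

Lemma sum_sub_uniq (R : realType) (T : eqType) (Y L : seq T) (F : T -> R) :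
  uniq Y -> uniq L -> {subset Y <= L} -> (forall x, 0 <= F x) ->
  \sum_(x <- Y) F x <= \sum_(x <- L) F x.
Proof.
move=> uY uL sYL F0.
rewrite [X in _ <= X](bigID (fun x => x \in Y)) /=.
have -> : \sum_(x <- L | x \in Y) F x = \sum_(x <- Y) F x.
  rewrite -big_filter; apply: perm_big; apply: uniq_perm.
  - exact: filter_uniq.
  - exact: uY.
  - move=> x; rewrite mem_filter; apply/andP/idP => [[]//|xY]; split => //.
    exact: sYL.
by rewrite lerDl sumr_ge0.
Qed.

Lemma rfun_pow (R : realType) d (alpha : R) (gamma : {fset nat} -> R) tau
    (h : {ffun 'I_d -> int}) : (forall u, 0 < gamma u) ->
  ((rfun alpha gamma h)^-1) `^ tau = (gamma (toN [set j | h j != 0])) `^ tau *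
    \prod_(j | h j != 0) ((`|h j|%:~R : R) `^ alpha) `^ (- tau).
Proof.
move=> g0.
have P0 : 0 <= (\prod_(j | h j != 0) (`|h j|%:~R : R) `^ alpha)^-1.
  by rewrite invr_ge0 prodr_ge0 // => j _; rewrite powR_ge0.
rewrite /rfun /supp invfM invrK powRM ?(ltW (g0 _)) //.
congr (_ * _).
rewrite -powR_inv1; last by rewrite prodr_ge0 // => j _; rewrite powR_ge0.
rewrite -powRrM mulN1r prod_powR // => j _; exact: powR_ge0.
Qed.

Lemma eopt_inj N : injective (@eopt N).
Proof.
by move=> [[[] i]|] [[[] j]|] //= [] // e; congr (Some (_, _)); apply: val_inj.
Qed.

Lemma fin_bound (R : realType) d (alpha : R) (gamma : {fset nat} -> R) (tau : R)
    (Y : seq {ffun 'I_d -> int}) :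
  (forall u, 0 < gamma u) -> 0 < tau -> 1 < alpha * tau -> uniq Y ->
  \sum_(h <- Y) ((rfun alpha gamma h)^-1) `^ tau <=
  \sum_(U : {set 'I_d}) (gamma (toN U)) `^ tau * (2 * zeta (alpha * tau)) ^+ #|U|.
Proof.
move=> g0 t0 at1 uY.
set N0 := \max_(h <- Y) \max_(j : 'I_d) `|h j|%N.
pose phi (k : {ffun 'I_d -> option (bool * 'I_N0.+1)}) : {ffun 'I_d -> int} :=
  [ffun j => eopt (k j)].
have phi_inj : injective phi.
  move=> k1 k2 /ffunP E; apply/ffunP => j; apply: eopt_inj.
  by have := E j; rewrite !ffunE.
pose L := map phi (index_enum {ffun 'I_d -> option (bool * 'I_N0.+1)}).
have uL : uniq L by rewrite map_inj_uniq // index_enum_uniq.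
have sYL : {subset Y <= L}.
  move=> h hY.
  have hb : forall j, (`|h j| <= N0)%N.
    move=> j; apply: leq_trans (leq_bigmax_seq _ hY isT).
    exact: leq_bigmax.
  pose k := [ffun j => if h j == 0 then None
                       else Some (h j < 0, inord (`|h j|.-1) : 'I_N0.+1)].
  have -> : h = phi k.
    apply/ffunP => j; rewrite !ffunE.
    have [->|nz] := eqVneq (h j) 0; first by [].
    rewrite /= inordK; last by rewrite ltnS (leq_trans (leq_pred _) (hb j)).
    have hj : (0 < `|h j|)%N by rewrite absz_gt0.
    have [hn|hp] := ltP (h j) 0.
      by rewrite prednK // abszE ltr0_norm // opprK.
    by rewrite prednK // abszE ger0_norm.
  by apply/mapP; exists k => //; rewrite mem_index_enum.
apply: le_trans (@sum_sub_uniq R _ Y L (fun h => ((rfun alpha gamma h)^-1) `^ tau) uY uL sYL (fun x => powR_ge0 _ _)) _.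
rewrite big_map.
have Fk : forall k, ((rfun alpha gamma (phi k))^-1) `^ tau =
    (fun U => (gamma (toN U)) `^ tau) [set j | eopt (k j) != 0] *
    \prod_(j | eopt (k j) != 0) (fun n : int => ((`|n|%:~R : R) `^ alpha) `^ (- tau)) (eopt (k j)).
  move=> k; rewrite (@rfun_pow R d alpha gamma tau (phi k) g0).
  have -> : [set j | phi k j != 0] = [set j | eopt (k j) != 0].
    by apply/setP => j; rewrite !inE ffunE.
  apply: f_equal; apply: eq_big => [j|j _]; by rewrite ffunE.
rewrite (eq_bigr _ (fun k _ => Fk k)).
rewrite (@fin_fact R d _ eopt (fun U => (gamma (toN U)) `^ tau)
   (fun n : int => ((`|n|%:~R : R) `^ alpha) `^ (- tau)) (@eopt0 R N0.+1)).
apply: ler_sum => U _; rewrite eoptW.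
apply: ler_wpM2l; first exact: powR_ge0.
have W0 : 0 <= \sum_(i < N0.+1) (i.+1%:R : R) `^ (- (alpha * tau)).
  by apply: sumr_ge0 => i _; exact: powR_ge0.
apply: lerXn2r.
- by rewrite nnegrE mulr_ge0.
- by rewrite nnegrE mulr_ge0 // (le_trans W0) // zeta_bound.
by rewrite ler_pM2l // zeta_bound.
Qed.



Lemma final_ineq (R : realType) (g mm sS kk alpha tau : R) :
  1 < alpha -> 0 < tau -> tau < 1 -> alpha^-1 * (mm + g) <= kk ->
  (expR mm) `^ (tau - 1) * expR sS - expR kk / expR mm <=
  (expR g) `^ ((tau - 1) / (alpha * tau)) * (tau / (1 - tau)) * (expR sS) `^ (1 / tau)
    * (expR mm) `^ (- ((1 - tau) / (alpha * tau))).
Proof.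
move=> a1 t0 t1 hk.
have a0 : 0 < alpha by lra.
have t1' : 0 < 1 - tau by lra.
set lA := g * ((tau - 1) / (alpha * tau)) + sS * (1 / tau) + mm * (- ((1 - tau) / (alpha * tau))).
have eA : (expR g) `^ ((tau - 1) / (alpha * tau)) * (tau / (1 - tau)) * (expR sS) `^ (1 / tau)
    * (expR mm) `^ (- ((1 - tau) / (alpha * tau))) = (tau / (1 - tau)) * expR lA.
  by rewrite -!expRM /lA !expRD; ring.
rewrite eA.
set B := expR kk / expR mm.
have eB : B = expR (kk - mm) by rewrite /B expRD expRN.
have young := @conjugate_powR R (expR (tau * lA)) (expR ((1 - tau) * (kk - mm))) tau^-1 (1 - tau)^-1
  (ltW (expR_gt0 _)) (ltW (expR_gt0 _)) ltac:(by rewrite invr_gt0) ltac:(by rewrite invr_gt0).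
have := young; rewrite !invrK => /(_ ltac:(by ring)).
rewrite -[(expR (tau * lA)) `^ _]expRM -[(expR ((1 - tau) * (kk - mm))) `^ _]expRM -expRD.
have -> : tau * lA * tau^-1 = lA by rewrite mulrAC mulfV ?mul1r // gt_eqF.
have -> : (1 - tau) * (kk - mm) * (1 - tau)^-1 = kk - mm by rewrite mulrAC mulfV ?mul1r // gt_eqF.
move=> Y.
have key : (expR mm) `^ (tau - 1) * expR sS <= expR (tau * lA + (1 - tau) * (kk - mm)).
  rewrite -expRM -expRD ler_expR /lA.
  have h1 : tau * (g * ((tau - 1) / (alpha * tau)) + sS * (1 / tau) +
     mm * - ((1 - tau) / (alpha * tau))) =
     (tau - 1) * alpha^-1 * g + sS - (1 - tau) * alpha^-1 * mm.
    by field; rewrite (gt_eqF a0) (gt_eqF t0).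
  rewrite h1.
  have h2 : 0 <= (1 - tau) * (kk - alpha^-1 * (mm + g)).
    by rewrite mulr_ge0 // subr_ge0 // ltW.
  rewrite -subr_ge0; apply: le_trans h2 _; rewrite le_eqVlt; apply/orP; left; apply/eqP.
  ring.
rewrite eB.
have Z : expR (tau * lA + (1 - tau) * (kk - mm)) <= expR lA * tau + expR (kk - mm) * (1 - tau).
  by move: Y; rewrite expRD.
have ek0 : 0 <= tau * expR (kk - mm) by rewrite mulr_ge0 // ltW // expR_gt0.
have ht : tau <= tau / (1 - tau).
  by rewrite ler_pdivlMr // ler_piMr ?(ltW t0) // gerBl ltW.
have ht2 : tau * expR lA <= tau / (1 - tau) * expR lA by rewrite ler_pM2r // expR_gt0.
apply: (@le_trans _ _ (expR lA * tau + expR (kk - mm) * (1 - tau) - expR (kk - mm))).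
  by rewrite lerD2r (le_trans key Z).
have -> : expR lA * tau + expR (kk - mm) * (1 - tau) - expR (kk - mm)
    = tau * expR lA - tau * expR (kk - mm) by ring.
by apply: le_trans ht2; rewrite gerBl.
Qed.


Lemma toN0 d : toN (finset.set0 : {set 'I_d}) = fset0.
Proof.
apply/fsetP => n; rewrite inE; apply/imfsetP => -[j]; rewrite /= enum_set0.
by [].
Qed.

Lemma toN1 d : toN [set (ord0 : 'I_d.+1)] = [fset 1%N]%fset.
Proof.
apply/fsetP => n; rewrite inE; apply/imfsetP/eqP => [[j]|->].
  by rewrite /= enum_set1 inE => /eqP -> ->.
by exists ord0; rewrite //= enum_set1 inE.
Qed.

Lemma powRV' (R : realType) (x r : R) : 0 < x -> (x^-1) `^ r = x `^ (- r).
Proof. by move=> x0; rewrite -powR_inv1 ?ltW // -powRrM mulN1r. Qed.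

Lemma pt_bound (R : realType) (a M tau : R) : 0 < a -> 1 <= M -> a < M^-1 ->
  0 < tau -> tau < 1 -> a <= M `^ (tau - 1) * a `^ tau.
Proof.
move=> a0 M1 aM t0 t1.
have M0 : 0 < M by exact: (Order.POrderTheory.lt_le_trans ltr01 M1).
have -> : M `^ (tau - 1) = (M^-1) `^ (1 - tau) by rewrite powRV' // opprB.
have ea : a = a `^ tau * a `^ (1 - tau).
  rewrite -powRD; last by apply/implyP => _; rewrite gt_eqF.
  by rewrite addrC subrK powRr1 // ltW.
rewrite [X in X <= _]ea mulrC ler_pM2r ?powR_gt0 //.
by apply: ge0_ler_powR; rewrite ?nnegrE ?subr_ge0 ?ltW // invr_gt0.
Qed.


End Helpers.
Import Helpers.

Theorem lemma6 (R : realType) (d : nat) (alpha : R) (gamma : {fset nat} -> R) (M : R) :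
  (1 <= d)%N -> 1 < alpha ->
  (forall u : {fset nat}, 0 < gamma u) -> gamma fset0 = 1 ->
  1 <= M ->
  forall tau : R, alpha^-1 < tau -> tau < 1 ->
  (\esum_(h in [set h : {ffun 'I_d -> int} | (M < rfun alpha gamma h)%R])
      ((rfun alpha gamma h)^-1)%:E
    <= (C2 d tau alpha gamma * M `^ (- ((1 - tau) / (alpha * tau))))%:E)%E.
Proof.
move=> d1 a1 g0 gE M1 tau ta t1.
have a0 : 0 < alpha by exact: (Order.POrderTheory.lt_trans ltr01 a1).
have M0 : 0 < M by exact: (Order.POrderTheory.lt_le_trans ltr01 M1).
have t0 : 0 < tau by apply: Order.POrderTheory.lt_trans ta; rewrite invr_gt0.
have at1 : 1 < alpha * tau by rewrite -(@mulfV _ alpha) ?gt_eqF // ltr_pM2l.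
case: d d1 => // d _.
have r0 : forall h : {ffun 'I_d.+1 -> int}, 0 < rfun alpha gamma h.
  move=> h; rewrite /rfun mulr_gt0 ?invr_gt0 //.
  by apply: prodr_gt0 => j hj; rewrite powR_gt0 // ltr0z normr_gt0.
set S := \sum_(U : {set 'I_d.+1}) (gamma (toN U)) `^ tau * (2 * zeta (alpha * tau)) ^+ #|U|.
set g1 := gamma [fset 1%N]%fset.
set x := (M * g1) `^ alpha^-1.
set K := (Num.truncn x).+1.
have x0 : 0 <= x by exact: powR_ge0.
have xK : x <= K%:R by exact: ltW (truncnS_gt x).
pose e (k : nat) : {ffun 'I_d.+1 -> int} := [ffun j => if j == ord0 then k%:Z else 0].
have e_inj : injective e.
  move=> k1 k2 /ffunP /(_ ord0); rewrite !ffunE eqxx; by case.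
have g10 : 0 < g1 by exact: g0.
have eA : forall k, (k < K)%N -> rfun alpha gamma (e k) <= M.
  case=> [|k] kK.
    have -> : rfun alpha gamma (e 0%N) = 1.
      rewrite /rfun /supp.
      have -> : [set j | e 0%N j != 0] = finset.set0.
        by apply/setP => j; rewrite !inE ffunE; case: ifP.
      rewrite toN0 gE invr1 mul1r big_pred0 // => j; rewrite ffunE; by case: ifP.
    exact: M1.
  have hs : [set j | e k.+1 j != 0] = [set ord0].
    by apply/setP => j; rewrite !inE ffunE; case: (j == ord0).
  rewrite /rfun /supp hs toN1 -/g1 (big_pred1 ord0); last first.
    by move=> j; rewrite /= ffunE; case: (j == ord0).
  rewrite ffunE eqxx ger0_norm // mulrC -ler_pdivlMr ?invr_gt0 // invrK.
  have kx : (k.+1%:R : R) <= x.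
    apply: le_trans (_ : (Num.truncn x)%:R <= x); last by rewrite truncn_le.
    by rewrite ler_nat -ltnS.
  apply: le_trans (ge0_ler_powR (ltW a0) _ _ kx) _; rewrite ?nnegrE //.
  by rewrite /x -powRrM mulVf ?gt_eqF // powRr1 // ltW // mulr_gt0.
apply: ge_ereal_sup => _ [X [finX XI]] <-.
rewrite fsumEFin // lee_fin fsbig_finite //=.
set Xs := fset_set X.
have XB : forall h, h \in Xs -> M < rfun alpha gamma h.
  by move=> h; rewrite in_fset_set // inE => /XI.
have st1 : \sum_(h <- Xs) (rfun alpha gamma h)^-1 <=
    M `^ (tau - 1) * \sum_(h <- Xs) ((rfun alpha gamma h)^-1) `^ tau.
  rewrite mulr_sumr big_seq [X in _ <= X]big_seq; apply: ler_sum => h hX.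
  apply: pt_bound => //; first by rewrite invr_gt0.
  by rewrite ltf_pV2 ?posrE // XB.
have st2 : \sum_(h <- Xs) ((rfun alpha gamma h)^-1) `^ tau + K%:R * (M^-1) `^ tau <= S.
  have uY : uniq (Xs ++ map e (iota 0 K)).
    rewrite cat_uniq fset_uniq (map_inj_uniq e_inj) iota_uniq andbT andTb.
    apply/hasPn => h /mapP [k kin ->]; apply/negP => /XB.
    by rewrite ltNge eA //; move: kin; rewrite mem_iota add0n.
  have := @fin_bound R d.+1 alpha gamma tau _ g0 t0 at1 uY; rewrite big_cat big_map.
  apply: le_trans; rewrite lerD2l.
  have -> : K%:R * (M^-1) `^ tau = \sum_(j <- iota 0 K) (M^-1) `^ tau.
    rewrite (_ : iota 0 K = index_iota 0 K); last by rewrite /index_iota subn0.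
    by rewrite sumr_const_nat subn0 mulr_natl.
  rewrite big_seq [X in _ <= X]big_seq; apply: ler_sum => k.
  rewrite mem_iota add0n => /andP [_ kK].
  apply: ge0_ler_powR.
  - exact: ltW.
  - by rewrite nnegrE invr_ge0 ltW.
  - by rewrite nnegrE invr_ge0 ltW.
  - by rewrite lef_pV2 ?posrE // eA.
have S0 : 0 < S.
  apply: lt_le_trans st2; apply: ltr_wpDl.
    by apply: sumr_ge0 => h _; exact: powR_ge0.
  by rewrite mulr_gt0 ?ltr0n // powR_gt0 // invr_gt0.
have K0 : 0 < (K%:R : R) by rewrite ltr0n.
have x0' : 0 < x by rewrite powR_gt0 // mulr_gt0.
have hK : alpha^-1 * (ln M + ln g1) <= ln (K%:R : R).
  rewrite -lnM ?posrE // -ln_powR -/x.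
  by rewrite ler_ln ?posrE.
have F := @final_ineq R (ln g1) (ln M) (ln S) (ln (K%:R : R)) alpha tau a1 t0 t1 hK.
rewrite !lnK ?posrE // in F.
rewrite /C2 -/S -/g1.
apply: le_trans st1 _.
apply: le_trans F.
have eM : M `^ (tau - 1) * (M^-1) `^ tau = M^-1.
  rewrite powRV' // -powRD; last by apply/implyP => _; rewrite gt_eqF.
  by rewrite addrC addrA addNr add0r powR_inv1 // ltW.
apply: (@le_trans _ _ (M `^ (tau - 1) * (S - K%:R * (M^-1) `^ tau))).
  by rewrite ler_wpM2l ?powR_ge0 // lerBrDr.
by rewrite mulrBr mulrCA eM.
Qed.
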